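(* Let $X$ be a proper geodesic metric space equipped with the $C_0$ coarse structure, and let $f:X\to\mathbb{C}$ be a bounded continuous function. Then $f$ is a Higson function (i.e., $f\in C_{h_0}(X)$) if and only if $f$ is uniformly continuous.
   Context: The $C_0$ coarse structure on a metric space $(X,d)$ consists of all sets $E\subset X\times X$ such that for every $\epsilon>0$ there is a compact $K\subset X$ with $d(x,y)<\epsilon$ for all $(x,y)\in E\setminus(K\times K)$; such $E$ are called controlled sets. For a bounded continuous $f:X\to\mathbb{C}$ let $\mathbf{d}f:X\times X\to\mathbb{C}$, $\mathbf{d}f(x,y)=f(x)-f(y)$. $f$ is a Higson function if for every controlled set $E$ the restriction $\mathbf{d}f|_E$ vanishes at infinity (for every $\epsilon>0$ there is a compact $L\subset X\times X$ with $|\mathbf{d}f|<\epsilon$ on $E\setminus L$). $C_{h_0}(X)$ is the set of bounded continuous Higson functions. A map $f$ between metric spaces is uniformly continuous if there is a monotone $\omega:[0,\infty)\to[0,\infty)$ with $\lim_{t\to0}\omega(t)=0$ and $d(f(x),f(x'))\le\omega(d(x,x'))$ for all $x,x'$. *)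

(* Defs.v *)
From Stdlib Require Import Reals List.
Open Scope R_scope.

(* Complex numbers as pairs of reals, with the usual modulus. *)
Definition CC : Type := (R * R)%type.
Definition Csub (z w : CC) : CC := (fst z - fst w, snd z - snd w).
Definition Cmod (z : CC) : R := sqrt (fst z ^ 2 + snd z ^ 2).

Definition is_metric {T : Type} (d : T -> T -> R) : Prop :=
  (forall x y, 0 <= d x y) /\
  (forall x y, d x y = 0 <-> x = y) /\
  (forall x y, d x y = d y x) /\
  (forall x y z, d x z <= d x y + d y z).

Definition open_set {T : Type} (d : T -> T -> R) (U : T -> Prop) : Prop :=
  forall x, U x -> exists r, 0 < r /\ forall y, d x y < r -> U y.

Definition compact {T : Type} (d : T -> T -> R) (K : T -> Prop) : Prop :=
  forall (I : Type) (U : I -> T -> Prop),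
    (forall i, open_set d (U i)) ->
    (forall x, K x -> exists i, U i x) ->
    exists l : list I, forall x, K x -> exists i, In i l /\ U i x.

Definition proper_space {T : Type} (d : T -> T -> R) : Prop :=
  forall x r, compact d (fun y => d x y <= r).

Definition geodesic_space {T : Type} (d : T -> T -> R) : Prop :=
  forall x y, exists g : R -> T,
    g 0 = x /\ g (d x y) = y /\
    forall s t, 0 <= s <= d x y -> 0 <= t <= d x y -> d (g s) (g t) = Rabs (s - t).

(* Product metric on T x T (max metric; induces the product topology). *)
Definition dprod {T : Type} (d : T -> T -> R) (p q : T * T) : R :=
  Rmax (d (fst p) (fst q)) (d (snd p) (snd q)).

Definition C0_controlled {T : Type} (d : T -> T -> R) (E : T * T -> Prop) : Prop :=
  forall eps, 0 < eps -> exists K : T -> Prop, compact d K /\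
    forall x y, E (x, y) -> ~ (K x /\ K y) -> d x y < eps.

Definition f_bounded {T : Type} (f : T -> CC) : Prop :=
  exists M, forall x, Cmod (f x) <= M.

Definition f_continuous {T : Type} (d : T -> T -> R) (f : T -> CC) : Prop :=
  forall x eps, 0 < eps -> exists delta, 0 < delta /\
    forall y, d x y < delta -> Cmod (Csub (f x) (f y)) < eps.

(* df restricted to E vanishes at infinity. *)
Definition higson_C0 {T : Type} (d : T -> T -> R) (f : T -> CC) : Prop :=
  forall E, C0_controlled d E ->
    forall eps, 0 < eps -> exists L : T * T -> Prop, compact (dprod d) L /\
      forall x y, E (x, y) -> ~ L (x, y) -> Cmod (Csub (f x) (f y)) < eps.

Definition uniformly_continuous {T : Type} (d : T -> T -> R) (f : T -> CC) : Prop :=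
  exists w : R -> R,
    (forall t, 0 <= t -> 0 <= w t) /\
    (forall s t, 0 <= s -> s <= t -> w s <= w t) /\
    (forall eps, 0 < eps -> exists delta, 0 < delta /\
       forall t, 0 < t < delta -> w t < eps) /\
    (forall x x', Cmod (Csub (f x) (f x')) <= w (d x x')).

(* Main.v *)
Require Import Defs.
From Stdlib Require Import Reals List Lra Psatz Classical ClassicalEpsilon.
Open Scope R_scope.

Lemma Cmod_ge0 z : 0 <= Cmod z.
Proof. apply sqrt_pos. Qed.

Lemma sqrt_tri a1 a2 b1 b2 :
  sqrt ((a1+b1)^2+(a2+b2)^2) <= sqrt (a1^2+a2^2) + sqrt (b1^2+b2^2).
Proof.
  set (A := a1^2+a2^2). set (B := b1^2+b2^2).
  assert (hA0 : 0 <= A) by (unfold A; nra).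
  assert (hB0 : 0 <= B) by (unfold B; nra).
  pose proof (sqrt_pos A) as sA. pose proof (sqrt_pos B) as sB.
  pose proof (sqrt_sqrt A hA0) as hA. pose proof (sqrt_sqrt B hB0) as hB.
  assert (hAB : a1*b1+a2*b2 <= sqrt A * sqrt B).
  { rewrite <- sqrt_mult_alt by exact hA0.
    apply Rle_trans with (Rabs (a1*b1+a2*b2)); [apply RRle_abs|].
    rewrite <- sqrt_Rsqr_abs. apply sqrt_le_1_alt. unfold Rsqr, A, B.
    assert (E: (a1 ^ 2 + a2 ^ 2) * (b1 ^ 2 + b2 ^ 2) - (a1 * b1 + a2 * b2) * (a1 * b1 + a2 * b2) = (a1*b2 - a2*b1)^2) by ring.
    pose proof (pow2_ge_0 (a1*b2 - a2*b1)). lra. }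
  rewrite <- (sqrt_pow2 (sqrt A + sqrt B)) by lra.
  apply sqrt_le_1_alt.
  replace ((sqrt A + sqrt B)^2) with (sqrt A * sqrt A + sqrt B * sqrt B + 2*(sqrt A * sqrt B)) by ring.
  rewrite hA, hB.
  replace ((a1+b1)^2+(a2+b2)^2) with (A + B + 2*(a1*b1+a2*b2)) by (unfold A, B; ring).
  lra.
Qed.

Lemma Cmod_tri u v w : Cmod (Csub u w) <= Cmod (Csub u v) + Cmod (Csub v w).
Proof.
  destruct u as [u1 u2], v as [v1 v2], w as [w1 w2]; unfold Cmod, Csub; simpl.
  replace (u1 - w1) with ((u1-v1)+(v1-w1)) by ring.
  replace (u2 - w2) with ((u2-v2)+(v2-w2)) by ring.
  apply sqrt_tri.
Qed.

Lemma Cmod_sym u v : Cmod (Csub u v) = Cmod (Csub v u).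
Proof.
  destruct u as [u1 u2], v as [v1 v2]; unfold Cmod, Csub; simpl.
  f_equal; ring.
Qed.

Lemma list_min {A : Type} (g : A -> R) (l : list A) :
  exists m, 0 < m /\ forall a, In a l -> 0 < g a -> m <= g a.
Proof.
  induction l as [|a l [m [hm H]]].
  - exists 1. split; [lra|]. intros a [].
  - destruct (Rlt_dec 0 (g a)) as [ha|ha].
    + exists (Rmin m (g a)). split. { apply Rmin_glb_lt; auto. }
      intros b [<-|hb] hg. apply Rmin_r.
      apply Rle_trans with m; [apply Rmin_l| auto].
    + exists m. split; auto. intros b [<-|hb] hg. contradiction. auto.
Qed.

Lemma list_compact {T : Type} (d : T -> T -> R) (l : list T) :
  Defs.compact d (fun z => In z l).
Proof.
  intros I U _ Hc. induction l as [|a l IH].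
  - exists nil. intros x [].
  - destruct IH as [l' Hl'].
    { intros x hx. apply Hc. right; auto. }
    destruct (Hc a (or_introl eq_refl)) as [i hi].
    exists (i :: l'). intros x [<-|hx].
    + exists i. split; [left; auto| auto].
    + destruct (Hl' x hx) as [j [hj hU]]. exists j. split; [right; auto| auto].
Qed.

Lemma prod_compact {T : Type} (d : T -> T -> R) (Hm : is_metric d) (K : T -> Prop) :
  Defs.compact d K -> Defs.compact (dprod d) (fun p => K (fst p) /\ K (snd p)).
Proof.
  destruct Hm as [Hpos [Hzero [Hsym Htri]]].
  assert (Hdd : forall x, d x x = 0) by (intros x; apply Hzero; auto).
  intros HK I U HU Hc.
  assert (tube : forall a, K a -> exists ls : list I, exists r, 0 < r /\
     forall x' y', d a x' < r -> K y' -> exists i, In i ls /\ U i (x', y')).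
  { intros a Ka.
    pose (V := fun (ir : (I * R)%type) (y' : T) => exists y, d y y' < snd ir /\ 0 < snd ir /\
       forall x'' y'', d a x'' < 2 * snd ir -> d y y'' < 2 * snd ir -> U (fst ir) (x'', y'')).
    destruct (HK (I * R)%type V) as [l Hl].
    - intros [i r] y' [y [h1 [h2 h3]]]. simpl in *; exists (r - d y y'). split; [lra|].
      intros z hz. exists y. simpl in *. split; [|split; [exact h2|exact h3]].
      pose proof (Htri y y' z). lra.
    - intros y Ky. destruct (Hc (a, y)) as [i Hi]; [split; auto|].
      destruct (HU i (a, y) Hi) as [rho [hr hb]].
      exists (i, rho / 2). exists y. simpl. rewrite Hdd. split; [lra|]. split; [lra|].
      intros x'' y'' h1 h2. apply hb. unfold dprod; simpl. apply Rmax_lub_lt; lra.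
    - destruct (list_min snd l) as [m [hm hmin]].
      exists (map fst l), m. split; auto. intros x' y' hx Ky.
      destruct (Hl y' Ky) as [[i r] [hin [y [h1 [h2 h3]]]]].
      simpl in *. pose proof (hmin (i, r) hin h2) as hmr. simpl in hmr.
      exists i. split.
      + apply (in_map fst l (i, r)) in hin. exact hin.
      + apply h3; lra. }
  pose (W := fun (t : ((T * R) * list I)%type) (x' : T) => 0 < snd (fst t) /\
     (forall x' y', d (fst (fst t)) x' < snd (fst t) -> K y' -> exists i, In i (snd t) /\ U i (x', y'))
     /\ d (fst (fst t)) x' < snd (fst t)).
  destruct (HK _ W) as [l Hl].
  - intros t x' [h1 [h2 h3]]. exists (snd (fst t) - d (fst (fst t)) x'). split; [lra|].
    intros z hz. split; auto. split; auto. pose proof (Htri (fst (fst t)) x' z). lra.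
  - intros a Ka. destruct (tube a Ka) as [ls [r [hr ht]]]. exists ((a, r), ls).
    simpl. split; auto. split; auto. rewrite Hdd; auto.
  - exists (flat_map snd l). intros [x y] [Kx Ky]. simpl in *.
    destruct (Hl x Kx) as [t [hin [h1 [h2 h3]]]].
    destruct (h2 x y h3 Ky) as [i [hi hU]]. exists i. split; auto.
    apply in_flat_map. exists t; auto.
Qed.

Lemma arch e : 0 < e -> exists N : nat, / INR (S N) < e.
Proof.
  intro he. destruct (archimed_cor1 e he) as [N [h hN]].
  destruct N as [|N]; [lia| exists N; auto].
Qed.

Lemma dprod_tri {T : Type} (d : T -> T -> R) (Hm : is_metric d) a b c :
  dprod d a c <= dprod d a b + dprod d b c.
Proof.
  destruct Hm as [Hpos [Hzero [Hsym Htri]]]. unfold dprod.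
  pose proof (Rmax_l (d (fst a) (fst b)) (d (snd a) (snd b))).
  pose proof (Rmax_r (d (fst a) (fst b)) (d (snd a) (snd b))).
  pose proof (Rmax_l (d (fst b) (fst c)) (d (snd b) (snd c))).
  pose proof (Rmax_r (d (fst b) (fst c)) (d (snd b) (snd c))).
  pose proof (Htri (fst a) (fst b) (fst c)). pose proof (Htri (snd a) (snd b) (snd c)).
  apply Rmax_lub; lra.
Qed.

Lemma higson_unif (X : Type) (d : X -> X -> R) (f : X -> CC)
  (Hmetric : is_metric d) (Hcont : f_continuous d f) (Hhig : higson_C0 d f) :
  forall eps, 0 < eps -> exists del, 0 < del /\
    forall x y, d x y < del -> Cmod (Csub (f x) (f y)) < eps.
Proof.
  pose proof Hmetric as Hm.
  destruct Hmetric as [Hpos [Hzero [Hsym Htri]]].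
  assert (Hdd : forall x, d x x = 0) by (intros x; apply Hzero; auto).
  intros eps heps. apply NNPP; intro Hno.
  assert (H : forall n : nat, exists p : X * X, d (fst p) (snd p) < / INR (S n) /\
            eps <= Cmod (Csub (f (fst p)) (f (snd p)))).
  { intro n. apply NNPP; intro Hn. apply Hno. exists (/ INR (S n)). split.
    - apply Rinv_0_lt_compat, lt_0_INR; lia.
    - intros x y hxy. apply Rnot_le_lt; intro hle. apply Hn. exists (x, y); simpl; auto. }
  pose (p := fun n => proj1_sig (constructive_indefinite_description _ (H n))).
  assert (Hp : forall n, d (fst (p n)) (snd (p n)) < / INR (S n) /\
            eps <= Cmod (Csub (f (fst (p n))) (f (snd (p n))))).
  { intro n. exact (proj2_sig (constructive_indefinite_description _ (H n))). }
  pose (E := fun q : X * X => exists n, q = p n).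
  assert (HE : C0_controlled d E).
  { intros e he. destruct (arch e he) as [N hN].
    exists (fun z => In z (flat_map (fun n => fst (p n) :: snd (p n) :: nil) (seq 0 (S N)))).
    split; [apply list_compact|].
    intros x y [n hn] hK.
    destruct (Compare_dec.le_lt_dec n N) as [hle|hlt].
    - exfalso; apply hK; split; apply in_flat_map; exists n;
        (split; [apply in_seq; lia | rewrite <- hn; simpl; auto]).
    - assert (Ed : d x y = d (fst (p n)) (snd (p n))) by (rewrite <- hn; reflexivity).
      pose proof (Hp n) as [h1 _].
      assert (/ INR (S n) <= / INR (S N)).
      { apply Rinv_le_contravar; [apply lt_0_INR; lia| apply le_INR; lia]. }
      lra. }
  destruct (Hhig E HE eps heps) as [L [HL HLE]].
  assert (inL : forall n, L (p n)).
  { intro n. apply NNPP; intro hn. pose proof (Hp n) as [_ h2].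
    destruct (p n) as [x y] eqn:Eq. simpl in h2.
    assert (E (x, y)) by (exists n; auto).
    pose proof (HLE x y H0 hn). lra. }
  pose (Good := fun (t : ((X * X) * R)%type) => 0 < snd t /\ forall p', dprod d (fst t) p' < snd t ->
     Cmod (Csub (f (fst p')) (f (snd p'))) < eps \/ snd t <= d (fst p') (snd p')).
  pose (U := fun (t : ((X * X) * R)%type) (p' : X * X) => Good t /\ dprod d (fst t) p' < snd t).
  destruct (HL _ U) as [l Hl].
  - intros t p' [hg hd]. exists (snd t - dprod d (fst t) p'). split; [lra|].
    intros z hz. split; auto. pose proof (dprod_tri d Hm (fst t) p' z). lra.
  - intros [a b] _. destruct (Hcont a (eps / 2)) as [del [hdel hc]]; [lra|].
    destruct (Rlt_dec (d a b) (del / 2)) as [hab|hab].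
    + exists ((a, b), del / 4). split.
      * split; [simpl; lra|]. intros [x' y'] hq. left. unfold dprod in hq; simpl in hq |- *.
        assert (h1 : d a x' < del / 4) by (apply Rle_lt_trans with (2 := hq); apply Rmax_l).
        assert (h2 : d b y' < del / 4) by (apply Rle_lt_trans with (2 := hq); apply Rmax_r).
        pose proof (Htri a b y').
        pose proof (hc x' ltac:(lra)). pose proof (hc y' ltac:(lra)).
        pose proof (Cmod_tri (f x') (f a) (f y')). rewrite (Cmod_sym (f x') (f a)) in H3.
        lra.
      * unfold dprod; simpl. rewrite !Hdd. apply Rmax_lub_lt; lra.
    + assert (hab0 : 0 < d a b) by lra.
      exists ((a, b), d a b / 4). split.
      * split; [simpl; lra|]. intros [x' y'] hq. right. unfold dprod in hq; simpl in hq |- *.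
        assert (h1 : d a x' < d a b / 4) by (apply Rle_lt_trans with (2 := hq); apply Rmax_l).
        assert (h2 : d b y' < d a b / 4) by (apply Rle_lt_trans with (2 := hq); apply Rmax_r).
        pose proof (Htri a x' b). pose proof (Htri x' y' b). pose proof (Hsym b y'). lra.
      * unfold dprod; simpl. rewrite !Hdd. apply Rmax_lub_lt; lra.
  - destruct (list_min (fun t => snd t) l) as [m [hm hmin]].
    destruct (arch m hm) as [N hN].
    destruct (Hl (p N) (inL N)) as [t [hin [[hr hg] hdt]]].
    pose proof (Hp N) as [h1 h2].
    destruct (hg (p N) hdt) as [hc | hr2].
    + lra.
    + pose proof (hmin t hin hr). simpl in *. lra.
Qed.

Lemma Cmod_sub0 z : Cmod (Csub z (0, 0)) = Cmod z.
Proof. destruct z as [a b]; unfold Cmod, Csub; simpl; f_equal; ring. Qed.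
Lemma Cmod_0sub z : Cmod (Csub (0, 0) z) = Cmod z.
Proof. destruct z as [a b]; unfold Cmod, Csub; simpl; f_equal; ring. Qed.

Theorem theorem3p4 (X : Type) (d : X -> X -> R) (f : X -> CC)
  (Hmetric : is_metric d) (Hproper : proper_space d) (Hgeod : geodesic_space d)
  (Hbdd : f_bounded f) (Hcont : f_continuous d f) :
  higson_C0 d f <-> uniformly_continuous d f.
Proof.
  split.
  - intro Hhig. destruct Hbdd as [M HM].
    assert (HB : forall x y, Cmod (Csub (f x) (f y)) <= M + M).
    { intros x y. pose proof (Cmod_tri (f x) (0, 0) (f y)).
      rewrite Cmod_sub0, Cmod_0sub in H. pose proof (HM x). pose proof (HM y). lra. }
    pose (S := fun t v => v = 0 \/ exists x y, d x y <= t /\ v = Cmod (Csub (f x) (f y))).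
    assert (bnd : forall t, bound (S t)).
    { intro t. exists (Rmax (M + M) 0). intros v [->|[x [y [_ ->]]]].
      - apply Rmax_r.
      - apply Rle_trans with (M + M); [apply HB| apply Rmax_l]. }
    pose (w := fun t => proj1_sig (completeness (S t) (bnd t) (ex_intro _ 0 (or_introl eq_refl)))).
    assert (Hw : forall t, is_lub (S t) (w t)).
    { intro t. exact (proj2_sig (completeness (S t) (bnd t) (ex_intro _ 0 (or_introl eq_refl)))). }
    exists w. split; [|split; [|split]].
    + intros t _. apply (proj1 (Hw t)). left; auto.
    + intros s t hs hst. apply (proj2 (Hw s)). intros v [hv|[x [y [h1 h2]]]];
        apply (proj1 (Hw t)); [left; auto | right; exists x, y; split; [lra| auto]].
    + intros eps heps.
      destruct (higson_unif X d f Hmetric Hcont Hhig (eps / 2)) as [del [hdel hu]]; [lra|].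
      exists del. split; auto. intros t [ht1 ht2].
      apply Rle_lt_trans with (eps / 2); [|lra]. apply (proj2 (Hw t)).
      intros v [->|[x [y [h1 ->]]]]; [lra| left; apply hu; lra].
    + intros x x'. apply (proj1 (Hw _)). right. exists x, x'. split; [lra| auto].
  - intros [w [hw0 [hwm [hws hwd]]]] E HE eps heps.
    destruct (hws eps heps) as [del [hdel hd]].
    destruct (HE del hdel) as [K [HK HKE]].
    exists (fun p => K (fst p) /\ K (snd p)). split; [apply prod_compact; auto|].
    intros x y hE hL. assert (hxy : d x y < del) by (apply HKE; auto).
    assert (h0 : 0 <= d x y) by (apply (proj1 Hmetric)).
    apply Rle_lt_trans with (w (d x y)); auto.
    apply Rle_lt_trans with (w ((d x y + del) / 2)).
    + apply hwm; lra.
    + apply hd; lra.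
Qed.
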